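(* Let $X,Y$ be topological spaces, $(Z,d)$ a metric space and $\mathcal F\subseteq Z^{X\times Y}$ a family of separately equicontinuous functions, i.e. $\{f(x,\cdot):f\in\mathcal F\}$ is equicontinuous on $Y$ for each $x\in X$ and $\{f(\cdot,y):f\in\mathcal F\}$ is equicontinuous on $X$ for each $y\in Y$. Then $\mathcal F$ is equi-weakly separated (as a family of functions on $X\times Y$ with the product topology).
   Context: A neighborhood assignment on a space $W$ is a family $\{V_w\}_{w\in W}$ of open subsets of $W$ with $w\in V_w$. $\mathcal F\subseteq Z^W$ is equi-weakly separated if for every $\varepsilon>0$ there is a neighborhood assignment $\{V_w\}_{w\in W}$ such that for all $p,q\in W$ and all $f\in\mathcal F$, $(p,q)\in V_q\times V_p$ implies $d(f(p),f(q))<\varepsilon$. A family of functions is equicontinuous on a space if at every point $x$, for each $\varepsilon>0$ there is a neighborhood $U$ of $x$ with $d(f(x'),f(x))<\varepsilon$ for all $x'\in U$ and all members $f$. *)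

(* Defs.v *)
From HB Require Import structures.
From mathcomp Require Import all_boot all_order all_algebra.
From mathcomp Require Import all_classical all_reals topology.
Set Implicit Arguments. Unset Strict Implicit. Unset Printing Implicit Defensive.
Import Order.TTheory GRing.Theory Num.Theory.
Local Open Scope classical_set_scope.
Local Open Scope ring_scope.

Definition is_metric (R : realType) (Z : Type) (d : Z -> Z -> R) : Prop :=
  (forall x y, 0 <= d x y) /\
  (forall x y, d x y = 0 <-> x = y) /\
  (forall x y, d x y = d y x) /\
  (forall x y z, d x z <= d x y + d y z).

Definition equicont_family (R : realType) (T : topologicalType) (Z : Type)
  (d : Z -> Z -> R) (G : set (T -> Z)) : Prop :=
  forall (x : T) (eps : R), 0 < eps ->
    exists U : set T, nbhs x U /\
      forall x' f, U x' -> G f -> d (f x') (f x) < eps.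

Definition nbhd_assignment (W : topologicalType) (V : W -> set W) : Prop :=
  forall w, open (V w) /\ V w w.

Definition equi_weakly_separated (R : realType) (W : topologicalType) (Z : Type)
  (d : Z -> Z -> R) (G : set (W -> Z)) : Prop :=
  forall eps : R, 0 < eps ->
    exists V : W -> set W, nbhd_assignment V /\
      forall (p q : W) (f : W -> Z), G f -> V q p -> V p q -> d (f p) (f q) < eps.

(* Main.v *)
Require Import Defs.
From HB Require Import structures.
From mathcomp Require Import all_boot all_order all_algebra.
From mathcomp Require Import all_classical all_reals topology.
Import Order.TTheory GRing.Theory Num.Theory.
Local Open Scope classical_set_scope.
Local Open Scope ring_scope.

Theorem corollary3p14 (R : realType) (X Y : topologicalType) (Z : Type)
  (d : Z -> Z -> R) (F : set (X * Y -> Z)) :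
  is_metric d ->
  (forall x : X, equicont_family d [set (fun y : Y => f (x, y)) | f in F]) ->
  (forall y : Y, equicont_family d [set (fun x : X => f (x, y)) | f in F]) ->
  equi_weakly_separated d F.
Proof.
move=> [d0 [_ [dsym dtri]]] eqY eqX eps eps0.
have e2 : 0 < eps / 2 by rewrite divr_gt0.
have H : forall w : X * Y, exists V : set (X * Y),
    (open V /\ V w) /\ forall p f, V p -> F f ->
      d (f (p.1, w.2)) (f w) < eps / 2 /\ d (f (w.1, p.2)) (f w) < eps / 2.
  case=> x y.
  have [U [hU HU]] := eqX y x _ e2.
  have [W [hW HW]] := eqY x y _ e2.
  have : nbhs (x, y) (U `*` W) by exists (U, W).
  rewrite nbhsE => -[B [oB Bw] BUW].
  exists B; split => // p f Bp Ff.
  have [/= Up Wp] := BUW p Bp.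
  split.
  - exact: (HU p.1 (fun x => f (x, y)) Up (ex_intro2 _ _ f Ff erefl)).
  - exact: (HW p.2 (fun y => f (x, y)) Wp (ex_intro2 _ _ f Ff erefl)).
have [V HV] := choice H.
exists V; split.
  by move=> w; have [] := HV w.
move=> [x1 y1] [x2 y2] f Ff Vqp Vpq.
have [_ Hq] := HV (x2, y2).
have [_ Hp] := HV (x1, y1).
have [h1 _] := Hq _ _ Vqp Ff.
have [_ h2] := Hp _ _ Vpq Ff.
rewrite /= in h1 h2.
apply: (le_lt_trans (dtri _ (f (x1, y2)) _)).
rewrite dsym in h2.
by rewrite [eps]splitr ltrD.
Qed.
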